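(* Let $\mathrm b$ be a profile, $C\ge 0$, $r>0$, and $n$ large enough that $\rho_n^\pm:=\tfrac12\pm\tfrac{r}{n^{1/3}}\in[1/4,3/4]$. With $$\Delta_n^{\mathrm b}(u):=\frac{L^{\mathrm b}[un^{2/3}]_n-L^{\mathrm b}[0]_n}{2^{3/2}n^{1/3}},\qquad B^{\pm}_n(u):=\frac{L^{\rho_n^\pm}[un^{2/3}]_n-L^{\rho_n^\pm}[0]_n-\mu_{\rho_n^\pm}un^{2/3}}{2^{3/2}n^{1/3}},\quad \mu_\rho=\frac{2\rho-1}{\rho(1-\rho)},$$ and $$E_n(r):=\left\{Z^{\rho_n^-}[Cn^{2/3}]_n\le Z^{\mathrm b}[0]_n\ \text{ and }\ Z^{\mathrm b}[Cn^{2/3}]_n\le Z^{\rho_n^+}[0]_n\right\},$$ on the event $E_n(r)$ one has, for every $\delta\in[0,C]$, $$W_{\Delta^{\mathrm b}_n}(\delta)\le\max\left\{W_{B^-_n}(\delta),W_{B^+_n}(\delta)\right\}+3\sqrt2\,\delta r,$$ where for a process $X$ on $[0,C]$, $W_X(\delta):=\sup\{|X(u)-X(v)|:u,v\in[0,C],\ |u-v|\le\delta\}$.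
   Context: Let $\omega=\{\omega_{i,j}:(i,j)\in\mathbb Z^2,\ i+j>0\}$ be i.i.d. exponential random variables with parameter $1$. Write $(i,j)\le(k,l)$ if $i\le k$ and $j\le l$. An up-right path from $\mathbf x$ to $\mathbf y$ is a sequence $\mathbf x=\mathbf x_0,\dots,\mathbf x_m=\mathbf y$ with increments in $\{(1,0),(0,1)\}$; its passage time is $\sum_{i=1}^m\omega_{\mathbf x_i}$ (starting point excluded). For $\mathbf x=(i,j)\le\mathbf y$ with $i+j\ge0$, $L(\mathbf x,\mathbf y)$ is the maximal passage time over up-right paths. Set $L_k(\mathbf x)=L((k,-k),\mathbf x)$, $C^{\mathbf x}=\{k\in\mathbb Z:(k,-k)\le\mathbf x\}$; for integer $k$, $[k]_n:=(n+k,n-k)$, for real $x$, $[x]_n:=[\lfloor x\rfloor]_n$. A profile is $\mathrm b:\mathbb Z\to\mathbb R\cup\{-\infty\}$ with $\mathrm b(0)=0$ (possibly random, independent of $\omega$); $L^{\mathrm b}(\mathbf x):=\max_{k\in C^{\mathbf x}}\{\mathrm b(k)+L_k(\mathbf x)\}$ and $Z^{\mathrm b}(\mathbf x)$ is the largest maximizing $k$. For $\rho\in(0,1)$ the stationary profile $\mathrm s_\rho$ is $\mathrm s_\rho(0)=0$, $\mathrm s_\rho(k)=\sum_{i=1}^k\zeta_i$ ($k>0$), $\mathrm s_\rho(k)=-\sum_{i=k+1}^0\zeta_i$ ($k<0$), with $\zeta_i$ i.i.d. copies of $E_1-E_2$, $E_1,E_2$ independent exponentials of rates $1-\rho$ and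 $\rho$, independent of $\omega$; $L^\rho:=L^{\mathrm s_\rho}$, $Z^\rho:=Z^{\mathrm s_\rho}$. All processes use the same $\omega$. *)

(* Defs.v *)
From HB Require Import structures.
From mathcomp Require Import all_boot all_order all_algebra.
From mathcomp Require Import all_classical all_reals.
From mathcomp Require Import ereal exp.
Set Implicit Arguments. Unset Strict Implicit. Unset Printing Implicit Defensive.
Import Order.TTheory GRing.Theory Num.Theory.
Local Open Scope classical_set_scope.
Local Open Scope ring_scope.

Section LPP.
Variable R : realType.

Definition pt := (int * int)%type.

Definition ptle (x y : pt) : Prop := (x.1 <= y.1) /\ (x.2 <= y.2).

(* An up-right path starting at x is encoded by its list of steps
   (true = (1,0), false = (0,1)); its t-th point is path_pt x s t. *)
Definition path_pt (x : pt) (s : seq bool) (t : nat) : pt :=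
  (x.1 + (count id (take t s))%:Z, x.2 + (count negb (take t s))%:Z).

(* passage time: sum of weights of x_1, ..., x_m (start excluded) *)
Definition passage (omega : pt -> R) (x : pt) (s : seq bool) : R :=
  \sum_(1 <= t < (size s).+1) omega (path_pt x s t).

Definition paths_from_to (x y : pt) : set (seq bool) :=
  [set s | path_pt x s (size s) = y].

Definition LPT (omega : pt -> R) (x y : pt) : \bar R :=
  ereal_sup [set (passage omega x s)%:E | s in paths_from_to x y].

Definition Lk (omega : pt -> R) (k : int) (x : pt) : \bar R :=
  LPT omega (k, - k) x.

Definition Cset (x : pt) : set int := [set k | ptle (k, - k) x].

Definition is_profile (b : int -> \bar R) : Prop :=
  b 0 = 0%E /\ forall k, b k != +oo%E.

Definition Lb (omega : pt -> R) (b : int -> \bar R) (x : pt) : \bar R :=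
  ereal_sup [set (b k + Lk omega k x)%E | k in Cset x].

Definition is_Zb (omega : pt -> R) (b : int -> \bar R) (x : pt) (k : int) : Prop :=
  Cset x k /\ (b k + Lk omega k x)%E = Lb omega b x /\
  forall k', Cset x k' -> (b k' + Lk omega k' x)%E = Lb omega b x -> k' <= k.

Definition Zb (omega : pt -> R) (b : int -> \bar R) (x : pt) : int :=
  xget 0 (is_Zb omega b x).

Definition diag (n : nat) (k : int) : pt := (n%:Z + k, n%:Z - k).
Definition rdiag (n : nat) (x : R) : pt := diag n (Num.floor x).

(* stationary profile built from increments zeta_i (i in Z):
   s(0)=0, s(k)=sum_{i=1}^k zeta_i (k>0), s(k)=-sum_{i=k+1}^0 zeta_i (k<0) *)
Definition stat_profile (zeta : int -> R) (k : int) : \bar R :=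
  (if 0 <= k then \sum_(i < `|k|%N) zeta (i.+1)%:Z
   else - \sum_(i < `|k|%N) zeta (- (i%:Z)))%:E.

Definition mu (rho : R) : R := (2 * rho - 1) / (rho * (1 - rho)).

Definition n13 (n : nat) : R := powR (n%:R) (3%:R^-1).
Definition n23 (n : nat) : R := powR (n%:R) (2%:R / 3%:R).

Definition rho_minus (n : nat) (r : R) : R := 2%:R^-1 - r / n13 n.
Definition rho_plus (n : nat) (r : R) : R := 2%:R^-1 + r / n13 n.

Definition scale (n : nat) : R := powR 2%:R (3%:R / 2%:R) * n13 n.

Definition Delta (omega : pt -> R) (b : int -> \bar R) (n : nat) (u : R) : \bar R :=
  ((Lb omega b (rdiag n (u * n23 n)) - Lb omega b (rdiag n 0)) * (scale n)^-1%:E)%E.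

Definition Bproc (omega : pt -> R) (zeta : int -> R) (rho : R) (n : nat) (u : R)
  : \bar R :=
  ((Lb omega (stat_profile zeta) (rdiag n (u * n23 n))
    - Lb omega (stat_profile zeta) (rdiag n 0)
    - (mu rho * u * n23 n)%:E) * (scale n)^-1%:E)%E.

Definition modW (C : R) (X : R -> \bar R) (delta : R) : \bar R :=
  ereal_sup [set `|X uv.1 - X uv.2|%E | uv in
    [set uv : R * R | 0 <= uv.1 <= C /\ 0 <= uv.2 <= C /\ `|uv.1 - uv.2| <= delta]].

End LPP.
Arguments n13 {R} n.
Arguments n23 {R} n.
Arguments scale {R} n.

(* Main.v *)
Require Import Defs.
From HB Require Import structures.
From mathcomp Require Import all_boot all_order all_algebra.
From mathcomp Require Import all_classical all_reals.
From mathcomp Require Import ereal exp.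
From mathcomp Require Import zify ring lra.
Import Order.TTheory GRing.Theory Num.Theory.
Local Open Scope ring_scope.

Section Aux.
Variable R : realType.
Variable omega : pt -> R.

Lemma path_pt_cat a s1 s2 t :
  path_pt a (s1 ++ s2) (size s1 + t) = path_pt (path_pt a s1 (size s1)) s2 t.
Proof.
rewrite /path_pt takeD take_size_cat // drop_size_cat //= !count_cat take_size.
by rewrite !PoszD !addrA.
Qed.

Lemma path_pt_take a s t : path_pt a (take t s) (size (take t s)) = path_pt a s t.
Proof. by rewrite /path_pt take_size. Qed.

Lemma passage_cat a s1 s2 :
  passage omega a (s1 ++ s2) =
  passage omega a s1 + passage omega (path_pt a s1 (size s1)) s2.
Proof.
rewrite /passage size_cat (@big_cat_nat _ _ _ (size s1).+1) //=; last by rewrite ltnS leq_addr.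
congr (_ + _).
  apply: eq_big_nat => t /andP [_ ht].
  by rewrite /path_pt takel_cat.
rewrite -add1n big_addn.
have -> : ((size s1 + size s2).+1 - size s1 = (size s2).+1)%N by lia.
apply: eq_big_nat => t _.
by rewrite addnC path_pt_cat.
Qed.

Lemma count_take_split (s : seq bool) t : (t <= size s)%N ->
  (count id (take t s) + count negb (take t s))%N = t.
Proof.
move=> ht; have := count_predC id (take t s).
rewrite size_take_min (minn_idPl ht) => H.
by rewrite -[X in _ = X]H.
Qed.

Lemma path_size a x s : paths_from_to a x s ->
  (size s)%:Z = (x.1 - a.1) + (x.2 - a.2).
Proof.
move=> h; have {h} : path_pt a s (size s) = x := h.
rewrite /path_pt take_size => <- /=.
have := @count_take_split s _ (leqnn (size s)); rewrite take_size => <-.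
rewrite PoszD; lia.
Qed.

Lemma path_ptle a s t : ptle a (path_pt a s t).
Proof. by rewrite /ptle /path_pt /=; split; rewrite lerDl. Qed.

Lemma list_max (d : Order.disp_t) (V : orderType d) (T : eqType) (l : seq T)
   (P : T -> Prop) (g : T -> V) :
  (exists t, t \in l /\ P t) ->
  exists t, [/\ t \in l, P t & forall t', t' \in l -> P t' -> (g t' <= g t)%O].
Proof.
elim: l => [|h l IH] [t [tin Pt]]; first by rewrite in_nil in tin.
case: (pselect (exists t, t \in l /\ P t)) => [ex|nex].
  have [m [ml Pm Mm]] := IH ex.
  case: (pselect (P h)) => Ph.
    case: (leP (g h) (g m)) => hm.
      exists m; split; [by rewrite in_cons ml orbT | done |].
      by move=> t'; rewrite in_cons => /orP [/eqP->|t'l] Pt' //; exact: Mm.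
    exists h; split; [by rewrite in_cons eqxx | done |].
    move=> t'; rewrite in_cons => /orP [/eqP->|t'l] Pt' //.
    exact: le_trans (Mm _ t'l Pt') (ltW hm).
  exists m; split; [by rewrite in_cons ml orbT | done |].
  by move=> t'; rewrite in_cons => /orP [/eqP->|t'l] Pt' //; exact: Mm.
have th : t = h.
  move: tin; rewrite in_cons => /orP [/eqP //|tl]; by case: nex; exists t.
subst t; exists h; split; [by rewrite in_cons eqxx | done |].
move=> t'; rewrite in_cons => /orP [/eqP->|t'l] Pt' //.
by case: nex; exists t'.
Qed.

Lemma Lk_ge a x s : paths_from_to a x s ->
  ((passage omega a s)%:E <= LPT omega a x)%E.
Proof. by move=> h; apply: ereal_sup_ubound; exists s. Qed.

Lemma geodesic a x : ptle a x -> exists s, [/\ paths_from_to a x s,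
   LPT omega a x = (passage omega a s)%:E &
   forall s', paths_from_to a x s' -> passage omega a s' <= passage omega a s].
Proof.
case=> h1 h2.
pose m := absz ((x.1 - a.1) + (x.2 - a.2)).
pose l := map (@tval m bool) (enum {: m.-tuple bool}).
have inl s : paths_from_to a x s -> s \in l.
  move=> /path_size hs.
  have Hs : size s == m by apply/eqP; rewrite /m -hs.
  by apply/mapP; exists (Tuple Hs) => //; rewrite mem_enum.
have ex : exists s, s \in l /\ paths_from_to a x s.
  pose s0 := nseq (absz (x.1 - a.1)) true ++ nseq (absz (x.2 - a.2)) false.
  suff P0 : paths_from_to a x s0 by exists s0; split => //; exact: inl.
  rewrite /paths_from_to /= /path_pt /s0 take_size !count_cat !count_nseq /=.
  rewrite !mul1n !mul0n addn0 add0n; case: x h1 h2 {m l inl s0} => x1 x2 /= h1 h2.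
  congr (_, _); lia.
have [s [sl Ps Ms]] := @list_max _ _ _ _ _ (passage omega a) ex.
exists s; split => //; last by move=> s' Ps'; apply: Ms => //; exact: inl.
apply/le_anti/andP; split; last exact: Lk_ge.
apply: ge_ereal_sup => _ [s' Ps' <-]; rewrite lee_fin; apply: Ms => //; exact: inl.
Qed.

Lemma Lk_fin k x : Cset x k -> exists l : R, Lk omega k x = l%:E.
Proof. by rewrite /Lk => /geodesic [s [_ -> _]]; eexists. Qed.

End Aux.


Section Aux2.
Variable R : realType.
Variable omega : pt -> R.

Lemma ivt (f : nat -> int) m : f 0%N <= 0 -> 0 <= f m ->
  (forall t, f t.+1 <= f t + 1) -> exists t, (t <= m)%N /\ f t = 0.
Proof.
move=> f0 fm st; elim: m fm => [|m IH] fm.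
  by exists 0%N; split => //; apply/le_anti; rewrite f0 fm.
case: (leP 0 (f m)) => h.
  by have [t [tm ft]] := IH h; exists t; split => //; exact: leqW.
exists m.+1; split => //; have := st m; lia.
Qed.

Lemma count_take_step (s : seq bool) t :
  (count id (take t s) <= count id (take t.+1 s) <= count id (take t s) + 1)%N.
Proof.
rewrite -addn1 takeD count_cat leq_addr /= leq_add2l.
case: (drop t s) => [|[] ?]. all: by rewrite /= ?take0.
Qed.

Lemma crossing (N : nat) (k k' z1 z2 : int) :
  z1 <= z2 -> k <= k' -> Cset (diag N k') z1 -> Cset (diag N k) z2 ->
  exists p1 p2 r1 r2 : R,
   [/\ Lk omega z1 (diag N k') = (p1 + r1)%:E,
       Lk omega z2 (diag N k) = (p2 + r2)%:E,
       ((p1 + r2)%:E <= Lk omega z1 (diag N k))%E,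
       ((p2 + r1)%:E <= Lk omega z2 (diag N k'))%E &
       Cset (diag N k) z1 /\ Cset (diag N k') z2].
Proof.
move=> z12 kk' C1 C2.
have [s1 [P1 L1 _]] := @geodesic R omega _ _ C1.
have [s2 [P2 L2 _]] := @geodesic R omega _ _ C2.
have sz1 := path_size _ _ _ P1; have sz2 := path_size _ _ _ P2.
rewrite /diag /= in sz1 sz2.
have e1 : size s1 = (2 * N)%N by lia.
have e2 : size s2 = (2 * N)%N by lia.
pose f (t : nat) : int := (z1 + (count id (take t s1))%:Z) - (z2 + (count id (take t s2))%:Z).
have [t [tN ft]] : exists t, (t <= 2 * N)%N /\ f t = 0.
  apply: ivt.
  - by rewrite /f !take0 /=; lia.
  - have h1 : z1 + (count id s1)%:Z = N%:Z + k'.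
      by move: P1; rewrite /paths_from_to /= /path_pt take_size => -[].
    have h2 : z2 + (count id s2)%:Z = N%:Z + k.
      by move: P2; rewrite /paths_from_to /= /path_pt take_size => -[].
    rewrite /f -{1}e1 take_size -e2 take_size; lia.
  - move=> u; rewrite /f.
    have := count_take_step s1 u; have := count_take_step s2 u; lia.
have ts1 : (t <= size s1)%N by rewrite e1.
have ts2 : (t <= size s2)%N by rewrite e2.
have w12 : path_pt (z1, - z1) s1 t = path_pt (z2, - z2) s2 t.
  have c1 := count_take_split _ _ ts1; have c2 := count_take_split _ _ ts2.
  rewrite /path_pt /=; move: ft; rewrite /f => ft.
  congr (_, _); lia.
set w := path_pt (z2, - z2) s2 t in w12.
pose p1 := passage omega (z1, - z1) (take t s1).
pose p2 := passage omega (z2, - z2) (take t s2).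
pose r1 := passage omega w (drop t s1).
pose r2 := passage omega w (drop t s2).
have ps1 : passage omega (z1, - z1) s1 = p1 + r1.
  by rewrite -{1}(cat_take_drop t s1) passage_cat path_pt_take w12.
have ps2 : passage omega (z2, - z2) s2 = p2 + r2.
  by rewrite -{1}(cat_take_drop t s2) passage_cat path_pt_take.
have Q1 : paths_from_to (z1, - z1) (diag N k) (take t s1 ++ drop t s2).
  rewrite /paths_from_to /= size_cat path_pt_cat path_pt_take w12 /w.
  by rewrite -(path_pt_take _ s2 t) -path_pt_cat -size_cat cat_take_drop.
have Q2 : paths_from_to (z2, - z2) (diag N k') (take t s2 ++ drop t s1).
  rewrite /paths_from_to /= size_cat path_pt_cat path_pt_take -/w -w12.
  by rewrite -(path_pt_take _ s1 t) -path_pt_cat -size_cat cat_take_drop.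
exists p1, p2, r1, r2; split.
- by rewrite /Lk L1 ps1.
- by rewrite /Lk L2 ps2.
- have := @Lk_ge R omega _ _ _ Q1; rewrite passage_cat path_pt_take w12.
  by move=> h; exact: h.
- have := @Lk_ge R omega _ _ _ Q2; rewrite passage_cat path_pt_take.
  by move=> h; exact: h.
- split.
  + have := path_ptle (z1, - z1) (take t s1 ++ drop t s2) (size (take t s1 ++ drop t s2)).
    by rewrite Q1.
  + have := path_ptle (z2, - z2) (take t s2 ++ drop t s1) (size (take t s2 ++ drop t s1)).
    by rewrite Q2.
Qed.

End Aux2.


Section Aux3.
Variable R : realType.
Variable omega : pt -> R.

Lemma Lb_ge (b : int -> \bar R) (x : pt) k : Cset x k ->
  (b k + Lk omega k x <= Lb omega b x)%E.
Proof. by move=> h; apply: ereal_sup_ubound; exists k. Qed.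

Lemma Zb_exists (b : int -> \bar R) (x : pt) : 0 <= x.1 + x.2 ->
  exists k, is_Zb omega b x k.
Proof.
move=> hx.
pose l := map (fun i : nat => - x.2 + i%:Z) (iota 0 (absz (x.1 + x.2)).+1).
have inl k : Cset x k -> k \in l.
  case=> /= h1 h2; apply/mapP; exists (absz (k + x.2)).
    by rewrite mem_iota; lia.
  lia.
pose f k := (b k + Lk omega k x)%E.
have ex : exists k, k \in l /\ Cset x k.
  exists x.1; have h : Cset x x.1 by split => //=; lia.
  by split => //; exact: inl.
have [k0 [k0l Ck0 Mk0]] := @list_max _ _ _ _ _ f ex.
have ex1 : exists k, k \in l /\ (Cset x k /\ f k = f k0) by exists k0.
have [k1 [k1l [Ck1 fk1] Mk1]] := @list_max _ _ _ _ _ id ex1.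
have Lbe : Lb omega b x = f k0.
  apply/le_anti/andP; split; last exact: Lb_ge.
  apply: ge_ereal_sup => _ [k Ck <-]; apply: Mk0 => //; exact: inl.
exists k1; split => //; split; first by rewrite -/(f k1) fk1 Lbe.
move=> k' Ck' e; apply: Mk1; first exact: inl.
by split => //; rewrite -Lbe.
Qed.

Lemma ZbP (b : int -> \bar R) (x : pt) : 0 <= x.1 + x.2 -> is_Zb omega b x (Zb omega b x).
Proof. by move=> h; apply: xgetPex; exact: Zb_exists. Qed.

Lemma Zb_fin (b : int -> \bar R) (x : pt) z c : (forall k, b k != +oo%E) ->
  is_Zb omega b x z -> (c%:E <= Lb omega b x)%E ->
  exists bz l : R, [/\ b z = bz%:E, Lk omega z x = l%:E & Lb omega b x = (bz + l)%:E].
Proof.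
move=> bnoo [Cz [ez _]] cle.
have [l el] := @Lk_fin R omega _ _ Cz.
move: (bnoo z) ez; case: (b z) => [bz| |] //= _ ez.
  by exists bz, l; split => //; rewrite -ez el.
by move: cle; rewrite -ez el addNye leeNy_eq.
Qed.

Lemma Zmono (b : int -> \bar R) N k k' z z' bz bz' :
  k <= k' -> is_Zb omega b (diag N k) z -> is_Zb omega b (diag N k') z' ->
  b z = bz%:E -> b z' = bz'%:E -> z <= z'.
Proof.
move=> kk' [Cz [ez _]] [Cz' [ez' Mz']] ebz ebz'.
case: (leP z z') => // hlt; exfalso.
have [p1 [p2 [r1 [r2 [L1 L2 G1 G2 [Cz'x Czy]]]]]] :=
  @crossing R omega N _ _ _ _ (ltW hlt) kk' Cz' Cz.
have [lx' elx'] := @Lk_fin R omega _ _ Cz'x.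
have [ly elly] := @Lk_fin R omega _ _ Czy.
have := Lb_ge b _ _ Cz'x; rewrite -ez ebz ebz' elx' L2 -!EFinD lee_fin => H1.
move: G1; rewrite elx' lee_fin => G1.
move: G2; rewrite elly lee_fin => G2.
have e : (b z + Lk omega z (diag N k') = Lb omega b (diag N k'))%E.
  apply/le_anti/andP; split; first exact: Lb_ge.
  rewrite -ez' ebz ebz' elly L1 -!EFinD lee_fin; lra.
by have := Mz' z Czy e; rewrite leNgt hlt.
Qed.

Lemma compare (b1 b2 : int -> \bar R) N k k' z1 z2 c1 c2 (A B C D : R) :
  k <= k' -> z1 <= z2 ->
  is_Zb omega b1 (diag N k') z1 -> is_Zb omega b2 (diag N k) z2 ->
  b1 z1 = c1%:E -> b2 z2 = c2%:E ->
  Lb omega b1 (diag N k') = A%:E -> Lb omega b1 (diag N k) = B%:E ->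
  Lb omega b2 (diag N k') = C%:E -> Lb omega b2 (diag N k) = D%:E ->
  A - B <= C - D.
Proof.
move=> kk' z12 [Cz1 [e1 _]] [Cz2 [e2 _]] eb1 eb2 eA eB eC eD.
have [p1 [p2 [r1 [r2 [L1 L2 G1 G2 [C1x C2y]]]]]] :=
  @crossing R omega N _ _ _ _ z12 kk' Cz1 Cz2.
have [lx elx] := @Lk_fin R omega _ _ C1x.
have [ly ely] := @Lk_fin R omega _ _ C2y.
have := Lb_ge b1 _ _ C1x; rewrite eB eb1 elx -EFinD lee_fin => H1.
have := Lb_ge b2 _ _ C2y; rewrite eC eb2 ely -EFinD lee_fin => H2.
move: G1; rewrite elx lee_fin => G1.
move: G2; rewrite ely lee_fin => G2.
have HA : c1 + (p1 + r1) = A by apply: EFin_inj; rewrite EFinD -eb1 -L1 e1 eA.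
have HD : c2 + (p2 + r2) = D by apply: EFin_inj; rewrite EFinD -eb2 -L2 e2 eD.
lra.
Qed.

End Aux3.


Section NumS.
Variable R : realType.

Lemma real_core (am_u am_v ab_u ab_v ap_u ap_v m0 b0 p0 mm mp u v N S c d : R) :
  0 < S -> 0 <= N -> mm <= 0 -> 0 <= mp -> - mm * N / S <= c -> mp * N / S <= c ->
  u <= v -> v - u <= d ->
  am_v - am_u <= ab_v - ab_u -> ab_v - ab_u <= ap_v - ap_u ->
  `|(ab_u - b0) / S - (ab_v - b0) / S| <=
  Num.max `|(am_u - m0 - mm * u * N) / S - (am_v - m0 - mm * v * N) / S|
          `|(ap_u - p0 - mp * u * N) / S - (ap_v - p0 - mp * v * N) / S| + c * d.
Proof.
move=> S0 N0 mm0 mp0 cm cp uv vd H1 H2.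
set q := S^-1.
have q0 : 0 < q by rewrite invr_gt0.
set bm := (am_u - m0 - mm * u * N) * q - (am_v - m0 - mm * v * N) * q.
set bp := (ap_u - p0 - mp * u * N) * q - (ap_v - p0 - mp * v * N) * q.
have em : - mm * N * q * (v - u) <= c * d.
  have h0 : 0 <= - mm * N * q by rewrite mulr_ge0 ?(ltW q0) // mulr_ge0 // oppr_ge0.
  apply: le_trans (_ : c * (v - u) <= _).
    by apply: ler_wpM2r => //; lra.
  apply: ler_wpM2l => //; apply: le_trans cm; exact: h0.
have ep : mp * N * q * (v - u) <= c * d.
  have h0 : 0 <= mp * N * q by rewrite mulr_ge0 ?(ltW q0) // mulr_ge0.
  apply: le_trans (_ : c * (v - u) <= _).
    by apply: ler_wpM2r => //; lra.
  apply: ler_wpM2l => //; apply: le_trans cp; exact: h0.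
have D1 : (am_v - am_u) * q <= (ab_v - ab_u) * q by rewrite ler_pM2r.
have D2 : (ab_v - ab_u) * q <= (ap_v - ap_u) * q by rewrite ler_pM2r.
have nbm : bm <= `|bm| by rewrite ler_norm.
have nbp : - bp <= `|bp| by rewrite -normrN ler_norm.
have mx1 : `|bm| <= Num.max `|bm| `|bp| by rewrite le_max lexx.
have mx2 : `|bp| <= Num.max `|bm| `|bp| by rewrite le_max lexx orbT.
have eX : (ab_u - b0) * q - (ab_v - b0) * q = - ((ab_v - ab_u) * q) by ring.
have ebm : bm = - ((am_v - am_u) * q) - (- mm * N * q * (v - u)) by rewrite /bm; ring.
have ebp : bp = - ((ap_v - ap_u) * q) + (mp * N * q * (v - u)) by rewrite /bp; ring.
rewrite eX.
move: nbm nbp mx1 mx2 ebm ebp; set M := Num.max _ _; set nm := `|bm|; set np := `|bp|.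
clearbody M nm np bm bp => nbm nbp mx1 mx2 ebm ebp.
rewrite ler_norml; apply/andP; split; lra.
Qed.


Lemma real_core2 (am_u am_v ab_u ab_v ap_u ap_v m0 b0 p0 mm mp u v N S c d : R) :
  0 < S -> 0 <= N -> mm <= 0 -> 0 <= mp -> - mm * N / S <= c -> mp * N / S <= c ->
  v <= u -> u - v <= d ->
  am_u - am_v <= ab_u - ab_v -> ab_u - ab_v <= ap_u - ap_v ->
  `|(ab_u - b0) / S - (ab_v - b0) / S| <=
  Num.max `|(am_u - m0 - mm * u * N) / S - (am_v - m0 - mm * v * N) / S|
          `|(ap_u - p0 - mp * u * N) / S - (ap_v - p0 - mp * v * N) / S| + c * d.
Proof.
move=> S0 N0 mm0 mp0 cm cp uv vd H1 H2.
have := @real_core am_v am_u ab_v ab_u ap_v ap_u m0 b0 p0 mm mp v u N S c d S0 N0 mm0 mp0 cm cp uv vd H1 H2.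
by rewrite distrC [X in Num.max X _]distrC [X in Num.max _ X]distrC.
Qed.

Lemma mu_facts (rho : R) : 4%:R^-1 <= rho <= 3%:R / 4%:R ->
  3%:R / 16%:R <= rho * (1 - rho) /\ mu rho * (rho * (1 - rho)) = 2 * rho - 1.
Proof.
move=> /andP [h1 h2]; split; first by nra.
rewrite /mu mulfVK //; apply/eqP => h0.
have : 3%:R / 16%:R <= rho * (1 - rho) by nra.
by rewrite h0; lra.
Qed.

Lemma const_bound (n : nat) (r : R) : (0 < n)%N -> 0 < r ->
  4%:R^-1 <= rho_minus n r <= 3%:R / 4%:R ->
  4%:R^-1 <= rho_plus n r <= 3%:R / 4%:R ->
  [/\ 0 <= mu (rho_plus n r), mu (rho_plus n r) * n23 n / scale n <= 3%:R * Num.sqrt 2%:R * r,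
      mu (rho_minus n r) <= 0 & - mu (rho_minus n r) * n23 n / scale n <= 3%:R * Num.sqrt 2%:R * r].
Proof.
move=> n0 r0 hm hp.
have nR : (0 : R) < n%:R by rewrite ltr0n.
set t := (n13 n : R).
have t0 : 0 < t by apply: powR_gt0.
have e23 : n23 n = t * t.
  rewrite /n23 /t /n13 -powRD; last by rewrite (gt_eqF nR) implybT.
  congr powR; lra.
set s2 := Num.sqrt 2%:R.
have s20 : 0 < s2 by rewrite sqrtr_gt0 ltr0n.
have s22 : s2 * s2 = 2%:R by rewrite -expr2 sqr_sqrtr // ler0n.
have esc : scale n = 2%:R * s2 * t.
  rewrite /scale -/t; congr (_ * _).
  have -> : (3%:R / 2%:R : R) = 1 + 2%:R^-1 by lra.
  rewrite powRD; last by rewrite pnatr_eq0 implybT.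
  by rewrite powRr1 ?ler0n // powR12_sqrt // ler0n.
have [qm em] := mu_facts _ hm.
have [qp ep] := mu_facts _ hp.
set a := r / t.
have at0 : a * t = r by rewrite /a mulfVK // gt_eqF.
have a0 : 0 < a by rewrite /a divr_gt0.
have Ep : 2 * rho_plus n r - 1 = 2 * a by rewrite /rho_plus /a -/t; lra.
have Em : 2 * rho_minus n r - 1 = - (2 * a) by rewrite /rho_minus /a -/t; lra.
move: qm em qp ep; set mm := mu _; set mp := mu _; set pm := rho_minus n r * _; set pp := rho_plus n r * _.
move=> qm em qp ep.
have mp0 : 0 <= mp by nra.
have mm0 : mm <= 0 by nra.
have mpb : mp * 3%:R / 16%:R <= 2 * a by nra.
have mmb : - mm * 3%:R / 16%:R <= 2 * a by nra.
have key (x : R) : 0 <= x -> x * 3%:R / 16%:R <= 2 * a -> x * n23 n / scale n <= 3%:R * s2 * r.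
  move=> x0 xb.
  rewrite e23 esc.
  have -> : x * (t * t) / (2%:R * s2 * t) = (x * t) / (2%:R * s2).
    by field; rewrite ?(gt_eqF s20) ?(gt_eqF t0) ?pnatr_eq0.
  rewrite ler_pdivrMr ?mulr_gt0 ?ltr0n //.
  have xt : x * t <= 32%:R / 3%:R * r.
    rewrite -at0; nra.
  apply: le_trans xt _.
  have -> : 3%:R * s2 * r * (2%:R * s2) = 6%:R * (s2 * s2) * r by ring.
  rewrite s22; nra.
split => //.
- exact: key.
- by apply: key mmb; rewrite oppr_ge0.
Qed.

End NumS.


Arguments Lk_fin {R} omega {k x}.
Arguments Lb_ge {R} omega b {x k}.
Arguments Zb_fin {R omega b x z} c.
Arguments ZbP {R omega} b {x}.
Arguments Zmono {R omega b N k k' z z' bz bz'}.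
Arguments compare {R omega b1 b2 N k k' z1 z2 c1 c2 A B C D}.
Arguments const_bound {R n r}.
Arguments real_core {R am_u am_v ab_u ab_v ap_u ap_v m0 b0 p0 mm mp u v N S c d}.
Arguments real_core2 {R am_u am_v ab_u ab_v ap_u ap_v m0 b0 p0 mm mp u v N S c d}.

Section Aux5.
Variable R : realType.
Variable omega : pt -> R.

Lemma sp_fin (zeta : int -> R) k : exists c : R, stat_profile zeta k = c%:E.
Proof. by rewrite /stat_profile; eexists. Qed.

Lemma diag_lvl n k : 0 <= (diag n k).1 + (diag n k).2.
Proof. rewrite /diag /=; lia. Qed.

Lemma CsetE n k z : Cset (diag n k) z <-> (z <= n%:Z + k /\ - z <= n%:Z - k).
Proof. by []. Qed.

Lemma Zb_fin2 (b : int -> \bar R) x z : (forall k, exists c : R, b k = c%:E) ->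
  is_Zb omega b x z ->
  exists bz l : R, [/\ b z = bz%:E, Lk omega z x = l%:E & Lb omega b x = (bz + l)%:E].
Proof.
move=> bf [Cz [ez _]]; have [bz e] := bf z; have [l el] := Lk_fin omega Cz.
by exists bz, l; split => //; rewrite -ez e el.
Qed.

Lemma Cset_mid n K k zm z0 : Cset (diag n K) zm -> Cset (diag n 0) z0 ->
  zm <= z0 -> 0 <= k -> k <= K -> Cset (diag n k) z0.
Proof. move=> /CsetE [h1 h2] /CsetE [h3 h4] h5 h6 h7; apply/CsetE; lia. Qed.

Lemma C00 n : Cset (diag n 0) 0.
Proof. apply/CsetE; lia. Qed.

End Aux5.
Arguments sp_fin {R}.
Arguments Zb_fin2 {R omega b x z}.

Theorem corollary1 (R : realType) (omega : pt -> R) (b : int -> \bar R)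
  (zeta_m zeta_p : int -> R) (C r : R) (n : nat) :
  is_profile b -> 0 <= C -> 0 < r -> (0 < n)%N ->
  4%:R^-1 <= rho_minus n r <= 3%:R / 4%:R ->
  4%:R^-1 <= rho_plus n r <= 3%:R / 4%:R ->
  (* the event E_n(r) *)
  Zb omega (stat_profile zeta_m) (rdiag n (C * n23 n)) <= Zb omega b (rdiag n (0:R)) ->
  Zb omega b (rdiag n (C * n23 n)) <= Zb omega (stat_profile zeta_p) (rdiag n (0:R)) ->
  forall delta : R, 0 <= delta <= C ->
    (modW C (Delta omega b n) delta <=
     maxe (modW C (Bproc omega zeta_m (rho_minus n r) n) delta)
          (modW C (Bproc omega zeta_p (rho_plus n r) n) delta)
     + (3%:R * Num.sqrt 2%:R * delta * r)%:E)%E.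
Proof.
move=> [b0 bnoo] hC hr hn hm hp HZ1 HZ2 delta /andP [hd0 hdC].
have [mp0 cp mm0 cm] := const_bound hn hr hm hp.
have nR : (0 : R) < n%:R by rewrite ltr0n.
have Npos : (0 : R) < n23 n by apply: powR_gt0.
have Spos : (0 : R) < scale n by rewrite /scale mulr_gt0 // powR_gt0 // ltr0n.
move: HZ1 HZ2; rewrite /rdiag floor0.
set N := (n23 n : R) in Npos cp cm *.
set S := (scale n : R) in Spos cp cm *.
set K := Num.floor (C * N).
set sm := stat_profile zeta_m; set sp := stat_profile zeta_p.
move=> HZ1 HZ2.
have K0 : 0 <= K by rewrite floor_ge0 mulr_ge0 // ltW.
have fl u : 0 <= u <= C -> 0 <= Num.floor (u * N) <= K.
  move=> /andP [u0 uC]; rewrite floor_ge0 mulr_ge0 ?(ltW Npos) //=.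
  by apply: le_floor; rewrite ler_pM2r.
have ZP bb k : is_Zb omega bb (diag n k) (Zb omega bb (diag n k)).
  apply: ZbP; exact: diag_lvl.
have smf := sp_fin zeta_m; have spf := sp_fin zeta_p.
set zm := Zb omega sm (diag n K) in HZ1.
set z0 := Zb omega b (diag n 0) in HZ1.
have Czm : Cset (diag n K) zm := (ZP sm K).1.
have Cz0 : Cset (diag n 0) z0 := (ZP b 0).1.
have C00 := C00 n.
have [l00 el00] := Lk_fin omega C00.
have [bz0 [lz0 [ebz0 elz0 _]]] : exists bz l : R,
    [/\ b z0 = bz%:E, Lk omega z0 (diag n 0) = l%:E & Lb omega b (diag n 0) = (bz + l)%:E].
  apply: (Zb_fin l00 bnoo (ZP b 0)).
  by have := Lb_ge omega b C00; rewrite b0 el00 add0e.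
have Bfin k : 0 <= k <= K -> exists bz l : R,
    [/\ b (Zb omega b (diag n k)) = bz%:E, Lk omega (Zb omega b (diag n k)) (diag n k) = l%:E
      & Lb omega b (diag n k) = (bz + l)%:E].
  move=> /andP [k0 kK].
  have Cz0k : Cset (diag n k) z0.
    exact: Cset_mid Czm Cz0 HZ1 k0 kK.
  have [l1 el1] := Lk_fin omega Cz0k.
  apply: (Zb_fin (bz0 + l1) bnoo (ZP b k)).
  by have := Lb_ge omega b Cz0k; rewrite ebz0 el1 -EFinD.
have LfinS (zeta : int -> R) k : exists bz l : R,
    [/\ stat_profile zeta (Zb omega (stat_profile zeta) (diag n k)) = bz%:E,
       Lk omega (Zb omega (stat_profile zeta) (diag n k)) (diag n k) = l%:E
     & Lb omega (stat_profile zeta) (diag n k) = (bz + l)%:E].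
  exact: Zb_fin2 (sp_fin zeta) (ZP _ k).
pose LB u := fine (Lb omega b (rdiag n (u * N))).
pose LM u := fine (Lb omega sm (rdiag n (u * N))).
pose LP u := fine (Lb omega sp (rdiag n (u * N))).
have LBE u : 0 <= u <= C -> Lb omega b (rdiag n (u * N)) = (LB u)%:E.
  move=> hu; have [bz [l [_ _ e]]] := Bfin _ (fl u hu).
  by rewrite /LB /rdiag e.
have LME u : Lb omega sm (rdiag n (u * N)) = (LM u)%:E.
  have [bz [l [_ _ e]]] := LfinS zeta_m (Num.floor (u * N)).
  by rewrite /LM /rdiag /sm e.
have LPE u : Lb omega sp (rdiag n (u * N)) = (LP u)%:E.
  have [bz [l [_ _ e]]] := LfinS zeta_p (Num.floor (u * N)).
  by rewrite /LP /rdiag /sp e.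
have key u v : 0 <= u -> u <= v -> v <= C ->
    LM v - LM u <= LB v - LB u /\ LB v - LB u <= LP v - LP u.
  move=> u0 uv vC.
  have hu : 0 <= u <= C by rewrite u0 (le_trans uv vC).
  have hv : 0 <= v <= C by rewrite vC (le_trans u0 uv).
  have /andP [k0 kK] := fl u hu; have /andP [k'0 k'K] := fl v hv.
  have kk' : Num.floor (u * N) <= Num.floor (v * N).
    by apply: le_floor; rewrite ler_pM2r.
  set k := Num.floor (u * N) in k0 kK kk'.
  set k' := Num.floor (v * N) in k'0 k'K kk'.
  have [cmy [_ [ecmy _ _]]] := LfinS zeta_m k'.
  have [cmK [_ [ecmK _ _]]] := LfinS zeta_m K.
  have [cpx [_ [ecpx _ _]]] := LfinS zeta_p k.
  have [cp0 [_ [ecp0 _ _]]] := LfinS zeta_p 0.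
  have [cbx [_ [ecbx _ _]]] := Bfin k (introT andP (conj k0 kK)).
  have [cby [_ [ecby _ _]]] := Bfin k' (introT andP (conj k'0 k'K)).
  have [cbK [_ [ecbK _ _]]] := Bfin K (introT andP (conj K0 (lexx K))).
  have m1 := Zmono k'K (ZP sm k') (ZP sm K) ecmy ecmK.
  have m2 := Zmono k0 (ZP b 0) (ZP b k) ebz0 ecbx.
  have m3 := Zmono k'K (ZP b k') (ZP b K) ecby ecbK.
  have m4 := Zmono k0 (ZP sp 0) (ZP sp k) ecp0 ecpx.
  split.
  - apply: (compare kk' _ (ZP sm k') (ZP b k) ecmy ecbx (LME v) (LME u) (LBE v hv) (LBE u hu)).
    exact: le_trans m1 (le_trans HZ1 m2).
  - apply: (compare kk' _ (ZP b k') (ZP sp k) ecby ecpx (LBE v hv) (LBE u hu) (LPE v) (LPE u)).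
    exact: le_trans m3 (le_trans HZ2 m4).
have r0 : rdiag n (0 : R) = rdiag n (0 * N) by rewrite mul0r.
have h0C : (0 : R) <= 0 <= C by rewrite lexx hC.
have DE u : 0 <= u <= C -> Delta omega b n u = ((LB u - LB 0) / S)%:E.
  move=> hu; rewrite /Delta -/N -/S r0 (LBE u hu) (LBE 0 h0C).
  by rewrite -EFinB -EFinM.
have BmE u : Bproc omega zeta_m (rho_minus n r) n u =
    ((LM u - LM 0 - mu (rho_minus n r) * u * N) / S)%:E.
  by rewrite /Bproc -/N -/S -/sm r0 (LME u) (LME 0) -!EFinB -EFinM.
have BpE u : Bproc omega zeta_p (rho_plus n r) n u =
    ((LP u - LP 0 - mu (rho_plus n r) * u * N) / S)%:E.
  by rewrite /Bproc -/N -/S -/sp r0 (LPE u) (LPE 0) -!EFinB -EFinM.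
apply: ge_ereal_sup => _ [[u v] Huv <-].
have [hu [hv huv]] := Huv.
have Hm : (`|Bproc omega zeta_m (rho_minus n r) n (u, v).1
            - Bproc omega zeta_m (rho_minus n r) n (u, v).2|
          <= modW C (Bproc omega zeta_m (rho_minus n r) n) delta)%E.
  by apply: ereal_sup_ubound; exists (u, v).
have Hp : (`|Bproc omega zeta_p (rho_plus n r) n (u, v).1
            - Bproc omega zeta_p (rho_plus n r) n (u, v).2|
          <= modW C (Bproc omega zeta_p (rho_plus n r) n) delta)%E.
  by apply: ereal_sup_ubound; exists (u, v).
rewrite /= !BmE -EFinB abse_EFin in Hm.
rewrite /= !BpE -EFinB abse_EFin in Hp.
rewrite /= (DE u hu) (DE v hv) -EFinB abse_EFin.
apply: le_trans (leeD2r _ (le_max2 Hm Hp)).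
rewrite -EFin_max -EFinD lee_fin.
have -> : 3%:R * Num.sqrt 2%:R * delta * r = (3%:R * Num.sqrt 2%:R * r) * delta by ring.
have /andP [u0 uC] := hu; have /andP [v0 vC] := hv.
case: (leP u v) => uv.
  have [h1 h2] := key u v u0 uv vC.
  apply: real_core => //; first exact: ltW.
  by apply: le_trans huv; rewrite distrC; exact: ler_norm.
have [h1 h2] := key v u v0 (ltW uv) uC.
apply: real_core2 => //; first exact: ltW.
  exact: ltW.
by apply: le_trans huv; exact: ler_norm.
Qed.
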